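(* Let $d\ge1$ and let $G$ be a $d$-regular triangle-free graph on $n$ vertices. Then for every $\lambda>0$, \[ \frac1n\overline\alpha_G(\lambda)\;\le\;\frac{1}{2d}\overline\alpha_{K_{d,d}}(\lambda)=\frac{\lambda(1+\lambda)^{d-1}}{2(1+\lambda)^d-1}, \] with equality only if $G$ is a disjoint union of copies of $K_{d,d}$.
   Context: For a graph $H$ and $\lambda>0$, $P_H(\lambda)=\sum_J\lambda^{|J|}$ summed over all independent sets $J$ of $H$ (including the empty set), and $\overline\alpha_H(\lambda)=\lambda P_H'(\lambda)/P_H(\lambda)$ is the expected size of an independent set drawn from the hard-core model $\Pr[J]=\lambda^{|J|}/P_H(\lambda)$. $K_{d,d}$ is the complete bipartite graph with parts of size $d$. *)

(* Defs.v *)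
From HB Require Import structures.
From mathcomp Require Import all_boot all_order all_algebra.
Set Implicit Arguments. Unset Strict Implicit. Unset Printing Implicit Defensive.
Import Order.TTheory GRing.Theory Num.Theory.
Local Open Scope ring_scope.

Definition simple_graph (V : finType) (e : rel V) : Prop :=
  (forall x y, e x y = e y x) /\ (forall x, ~~ e x x).

Definition regular (V : finType) (e : rel V) (d : nat) : Prop :=
  forall x : V, #|[set y | e x y]| = d.

Definition triangle_free (V : finType) (e : rel V) : Prop :=
  forall x y z : V, e x y -> e y z -> ~~ e x z.

Definition independent (V : finType) (e : rel V) (A : {set V}) : bool :=
  [forall x in A, forall y in A, ~~ e x y].

Definition indep_poly (R : nzRingType) (V : finType) (e : rel V) : {poly R} :=
  \sum_(A : {set V} | independent e A) 'X^#|A|.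

(* Hard-core expected size: lambda * P'(lambda) / P(lambda). *)
Definition alpha_bar (R : fieldType) (V : finType) (e : rel V) (lam : R) : R :=
  lam * ((indep_poly R e)^`()).[lam] / (indep_poly R e).[lam].

(* Complete bipartite graph K_{d,d} on vertices bool * 'I_d (side, index). *)
Definition Kdd_rel (d : nat) : rel (bool * 'I_d) := fun u v => u.1 != v.1.

(* G is (isomorphic to) a disjoint union of copies of K_{d,d}: a bijection
   V -> I * (bool * 'I_d) for some finite index type I of copies, carrying the
   edges of G exactly to edges inside a common copy of K_{d,d}. *)
Definition disjoint_union_Kdd (V : finType) (e : rel V) (d : nat) : Prop :=
  exists (I : finType) (f : V -> I * (bool * 'I_d)),
    bijective f /\
    forall x y, e x y = ((f x).1 == (f y).1) && Kdd_rel (f x).2 (f y).2.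

(* Main.v *)
Require Import Defs.
From HB Require Import structures.
From mathcomp Require Import all_boot all_order all_algebra.
From mathcomp Require Import ring lra zify.
Import Order.TTheory GRing.Theory Num.Theory.
Local Open Scope ring_scope.
Lemma sum_subset_pow (R : comNzRingType) (T : finType) (x : R) (n : nat) :
  forall U : {set T}, #|U| = n ->
  \sum_(S : {set T} | S \subset U) x ^+ #|S| = (1 + x) ^+ n.
Proof.
elim: n => [|n IH] U hU.
  have -> : U = set0 by apply/eqP; rewrite -cards_eq0 hU.
  rewrite (big_pred1 set0) ?cards0 ?expr0 // => S; by rewrite subset0.
have : (0 < #|U|)%N by rewrite hU.
case/card_gt0P => a aU.
have hU' : #|U :\ a| = n by rewrite (cardsD1 a U) aU in hU; case: hU.
rewrite (bigID (fun S : {set T} => a \in S)) /= addrC.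
have -> : \sum_(S : {set T} | (S \subset U) && (a \notin S)) x ^+ #|S|
          = \sum_(S : {set T} | S \subset U :\ a) x ^+ #|S|.
  apply: eq_bigl => S; rewrite subsetD1; by case: (S \subset U).
rewrite IH //.
rewrite (reindex_onto (fun S => a |: S) (fun S => S :\ a)) /=; last first.
  move=> S /andP[_ aS]; by rewrite setD1K.
have -> : \sum_(S : {set T} | ((a |: S) \subset U) && (a \in a |: S) && ((a |: S) :\ a == S)) x ^+ #|a |: S|
   = \sum_(S : {set T} | S \subset U :\ a) x * x ^+ #|S|.
  apply: eq_big => S.
    rewrite subUset sub1set aU setU11 /=.  rewrite andbT.
    apply/idP/idP.
      case/andP=> sU /eqP hS; rewrite subsetD1 sU /=.
      apply/negP => aS; have : a \in (a |: S) :\ a by rewrite hS.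
      by rewrite setD11.
    move=> sUa; have aS : a \notin S by apply/negP => /(subsetP sUa); rewrite setD11.
    rewrite (subset_trans sUa) ?subD1set //=.
    by rewrite setU1K.
  move=> /andP[_ /eqP hS]; have aS : a \notin S.
    apply/negP => aS; have : a \in (a |: S) :\ a by rewrite hS.
    by rewrite setD11.
  by rewrite cardsU1 aS exprS.
rewrite -mulr_sumr IH // exprS; ring.
Qed.
Lemma sum_subset_card_pow (R : comNzRingType) (T : finType) (x : R) (U : {set T}) :
  \sum_(S : {set T} | S \subset U) #|S|%:R * x ^+ #|S| = #|U|%:R * x * (1 + x) ^+ #|U|.-1.
Proof.
have hp := @sum_subset_pow {poly R} T 'X #|U| U erefl.
have := congr1 (fun p : {poly R} => x * (p^`()).[x]) hp.
rewrite /= raddf_sum /= horner_sum mulr_sumr deriv_exp.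
rewrite derivD derivC derivX add0r mul1r hornerMn horner_exp hornerD hornerC hornerX.
move=> h; rewrite mulrnAr -mulr_natl mulrA in h.
rewrite -h; apply: eq_bigr => S _.
rewrite derivXn hornerMn hornerXn.
case: #|S| => [|k]; first by rewrite !mulr0n mul0r mulr0.
by rewrite /= exprS mulrnAr mulr_natl.
Qed.
Lemma geo_lt (R : realFieldType) (a : R) (k m : nat) : 1 < a -> (0 < k)%N -> (k <= m)%N ->
  \sum_(i < k) a ^+ i < k%:R * a ^+ m.
Proof.
move=> a1 k0 km.
apply: (@lt_le_trans _ _ (\sum_(i < k) a ^+ m)).
  apply: ltr_sum; first by apply/hasP; exists (Ordinal k0); rewrite ?mem_index_enum.
  move=> i _; rewrite ltr_eXn2l //; exact: leq_trans (ltn_ord i) km.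
by rewrite sumr_const card_ord mulr_natl.
Qed.

Lemma concav (R : realFieldType) (a : R) (k : nat) : 1 < a -> forall n,
  (k + n)%:R * \sum_(i < k) a ^+ i <= k%:R * \sum_(i < k + n) a ^+ i /\
  ((0 < k)%N -> (0 < n)%N -> (k + n)%:R * \sum_(i < k) a ^+ i < k%:R * \sum_(i < k + n) a ^+ i).
Proof.
move=> a1; elim=> [|n [IHle IHlt]]; first by rewrite addn0; split.
have step : (0 < k)%N -> (k + n.+1)%:R * \sum_(i < k) a ^+ i < k%:R * \sum_(i < k + n.+1) a ^+ i.
  move=> k0.
  rewrite addnS big_ord_recr /= mulrDr -addn1 natrD mulrDl mul1r.
  apply: ler_ltD => //. apply: geo_lt => //; exact: leq_addr.
split; last by move=> k0 _; exact: step.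
case: k step IHle IHlt => [|k] step _ _; last by apply/ltW/step.
by rewrite big_ord0 !mulr0 mul0r.
Qed.
Definition pwL {R : realFieldType} (x : R) (d y : nat) : R :=
  d%:R * (1 + x) ^+ d * x + ((1 + x) ^+ d - 1) * (y%:R * x * (1 + x) ^+ y.-1).
Definition pwR {R : realFieldType} (x : R) (d y : nat) : R :=
  d%:R * x * (1 + x) ^+ d.-1 * (x + (1 + x) ^+ y).

Lemma pw_lt (R : realFieldType) (x : R) (d y : nat) : 0 < x -> (0 < y)%N -> (y < d)%N ->
  pwL x d y < pwR x d y.
Proof.
move=> x0 y0 yd.
have a1 : 1 < 1 + x by rewrite ltrDl.
set a := 1 + x.
case: y y0 yd => // m _ yd.
have [k ed] : exists k, d = (m.+1 + k)%N by exists (d - m.+1)%N; rewrite subnKC // ltnW.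
have k0 : (0 < k)%N by rewrite -(ltn_add2l m.+1) addn0 -ed.
subst d.
have [hle hlt] := @concav R a k a1 m.+1.
have hlt' := hlt k0 isT.
rewrite /pwL /pwR.
have hSd := subrX1 a (k + m.+1).
have hSk := subrX1 a k.
have ax : a - 1 = x by rewrite /a addrC addKr.
rewrite ax in hSd hSk.
set Sd := \sum_(i < k + m.+1) a ^+ i in hSd hlt'.
set Sk := \sum_(i < k) a ^+ i in hSk hlt'.
have eD : (m.+1 + k)%N.-1 = (m + k)%N by rewrite addSn.
rewrite eD.
have e1 : a ^+ (m.+1 + k) = a * (a ^+ m * a ^+ k) by rewrite -exprD -exprS.
have e2 : a ^+ (m + k) = a ^+ m * a ^+ k by rewrite exprD.
have e3 : a ^+ (k + m.+1) = a * (a ^+ m * a ^+ k) by rewrite addnC e1.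
rewrite e3 in hSd.
rewrite e1 e2 /= exprS.
set P := a ^+ m in hSd *. set Q := a ^+ k in hSd hSk *.
have P0 : 0 < P by rewrite exprn_gt0 // (lt_trans ltr01 a1).
rewrite -subr_gt0.
have -> : (m.+1 + k)%:R * x * (P * Q) * (x + a * P) -
   ((m.+1 + k)%:R * (a * (P * Q)) * x + (a * (P * Q) - 1) * (m.+1%:R * x * P))
   = x * P * (k%:R * (a * (P * Q) - 1) - (k + m.+1)%:R * (Q - 1)).
  rewrite /a !natrD; ring.
rewrite hSd hSk.
rewrite (_ : k%:R * (x * Sd) - (k + m.+1)%:R * (x * Sk) = x * (k%:R * Sd - (k + m.+1)%:R * Sk)); last by ring.
by rewrite !mulr_gt0 // subr_gt0.
Qed.

Lemma pw_le (R : realFieldType) (x : R) (d y : nat) : 0 < x -> (0 < d)%N -> (y <= d)%N ->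
  pwL x d y <= pwR x d y.
Proof.
move=> x0 d0 yd.
case: d d0 yd => // d _ yd.
case: y yd => [|y] yd.
  by rewrite /pwL /pwR /= expr0 exprS; rewrite le_eqVlt; apply/orP; left; apply/eqP; ring.
rewrite leq_eqVlt in yd; case/orP: yd => [/eqP [->] | yd].
  by rewrite /pwL /pwR /= exprS; rewrite le_eqVlt; apply/orP; left; apply/eqP; ring.
by apply: ltW; apply: pw_lt.
Qed.
Definition Nb {V : finType} (e : rel V) (v : V) : {set V} := [set y | e v y].
Definition Nc {V : finType} (e : rel V) (v : V) : {set V} := v |: Nb e v.
Definition Uset {V : finType} (e : rel V) (v : V) (J : {set V}) : {set V} :=
  [set u in Nb e v | [forall j in J, ~~ e u j]].

Lemma indepP {V : finType} (e : rel V) (A : {set V}) :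
  reflect (forall x y, x \in A -> y \in A -> ~~ e x y) (independent e A).
Proof.
apply: (iffP forall_inP) => [h x y xA yA | h x xA].
  by move: (h x xA) => /forall_inP; apply.
by apply/forall_inP => y yA; apply: h.
Qed.

Lemma decomp_pred {V : finType} (e : rel V) (v : V) (J S : {set V}) :
  simple_graph e -> triangle_free e ->
  J \subset ~: Nc e v -> independent e J ->
  [/\ (S \subset Nc e v) && independent e (J :|: S) && (v \in S) = (S == [set v]) &
      (S \subset Nc e v) && independent e (J :|: S) && (v \notin S) = (S \subset Uset e v J)].
Proof.
move=> [hsym hirr] htf hJ /indepP iJ.
have Jn z : z \in J -> (z != v) && ~~ e v z.
  move=> zJ; move/subsetP: hJ => /(_ z zJ); rewrite in_setC /Nc /Nb in_setU1 in_set negb_or.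
  by case/andP=> -> ->.
split.
  apply/idP/idP.
    case/andP=> /andP[sS /indepP iS] vS.
    rewrite eqEsubset sub1set vS andbT; apply/subsetP => z zS; rewrite inE.
    apply/negPn/negP => zv.
    move/subsetP: sS => /(_ z zS); rewrite /Nc !inE (negPf zv) /= => evz.
    by move: (iS v z); rewrite !inE vS zS !orbT evz => /(_ isT isT).
  move/eqP->; rewrite set11 andbT /Nc sub1set setU11 /=.
  apply/indepP => x y; rewrite !inE => /orP[xJ|/eqP->] /orP[yJ|/eqP->].
  - exact: iJ.
  - by rewrite hsym; case/andP: (Jn x xJ).
  - by case/andP: (Jn y yJ).
  - exact: hirr.
apply/idP/idP.
  case/andP=> /andP[sS /indepP iS] vS.
  apply/subsetP => z zS; rewrite /Uset !inE.
  have zv : z != v by apply/negP => /eqP zv; rewrite -zv zS in vS.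
  move/subsetP: sS => /(_ z zS); rewrite /Nc !inE (negPf zv) /= => ->.
  apply/forall_inP => j jJ; apply: iS; by rewrite inE ?zS ?jJ ?orbT.
move=> sU.
have sN : S \subset Nb e v.
  by apply/subsetP => z /(subsetP sU); rewrite /Uset inE => /andP[].
apply/andP; split; last first.
  by apply/negP => /(subsetP sN); rewrite /Nb inE (negPf (hirr v)).
apply/andP; split.
  by apply: (subset_trans sN); rewrite /Nc subsetUr.
apply/indepP => x y; rewrite !inE.
have hU z : z \in S -> e v z && [forall j in J, ~~ e z j].
  by move=> /(subsetP sU); rewrite /Uset !inE.
move=> /orP[xJ|xS] /orP[yJ|yS].
- exact: iJ.
- by case/andP: (hU y yS) => _ /forall_inP /(_ x xJ); rewrite hsym.
- by case/andP: (hU x xS) => _ /forall_inP /(_ y yJ).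
- case/andP: (hU x xS) => evx _; case/andP: (hU y yS) => evy _.
  apply/negP => exy; move: (htf v x y evx exy); by rewrite evy.
Qed.
Lemma decomp_sum {R : realFieldType} {V : finType} (e : rel V) (v : V) (F : {set V} -> R) :
  simple_graph e -> triangle_free e ->
  \sum_(I : {set V} | independent e I) F I =
  \sum_(J : {set V} | (J \subset ~: Nc e v) && independent e J)
     (F (J :|: [set v]) + \sum_(S : {set V} | S \subset Uset e v J) F (J :|: S)).
Proof.
move=> hG htf.
rewrite (partition_big (fun I => I :\: Nc e v)
   (fun J => (J \subset ~: Nc e v) && independent e J)); last first.
  move=> I /indepP iI; apply/andP; split.
    by apply/subsetP => z; rewrite !inE; case/andP.
  by apply/indepP => x y; rewrite !inE => /andP[_ xI] /andP[_ yI]; apply: iI.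
apply: eq_bigr => J /andP[hJ iJ].
rewrite (reindex_onto (fun S => J :|: S) (fun I => I :&: Nc e v)) /=; last first.
  by move=> I /andP[_ /eqP <-]; rewrite setUC setID.
have key S : independent e (J :|: S) && ((J :|: S) :\: Nc e v == J) &&
    ((J :|: S) :&: Nc e v == S) = (S \subset Nc e v) && independent e (J :|: S).
  rewrite -andbA andbC; congr (_ && _).
  have dJ z : z \in J -> ~~ ((z == v) || e v z).
    by move=> zJ; move/subsetP: hJ => /(_ z zJ); rewrite in_setC /Nc /Nb in_setU1 in_set.
  have cS z : z \in S -> S \subset Nc e v -> ((z == v) || e v z).
    by move=> zS sS; move/subsetP: sS => /(_ z zS); rewrite /Nc /Nb in_setU1 in_set.
  apply/idP/idP.
    by case/andP=> _ /eqP <-; apply: subsetIr.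
  move=> sS; apply/andP; split; apply/eqP/setP => z; rewrite !inE.
    case zJ: (z \in J); first by rewrite (negPf (dJ z zJ)).
    case zS: (z \in S); last by rewrite andbF.
    by rewrite (cS z zS sS).
  case zS: (z \in S); first by rewrite (cS z zS sS) orbT.
  case zJ: (z \in J) => //=.
  by rewrite (negPf (dJ z zJ)).
rewrite (eq_bigl _ _ key).
rewrite (bigID (fun S : {set V} => v \in S)) /=.
have hp S := decomp_pred e v J S hG htf hJ iJ.
congr (_ + _).
  apply: big_pred1 => S /=; by case: (hp S).
by apply: eq_bigl => S; case: (hp S).
Qed.
Lemma J_facts {V : finType} (e : rel V) (v : V) (J S : {set V}) :
  simple_graph e -> J \subset ~: Nc e v -> S \subset Uset e v J ->
  [/\ #|J :|: S| = (#|J| + #|S|)%N, #|J :|: [set v]| = (#|J|).+1,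
      v \notin J :|: S, v \in J :|: [set v] &
      (J :|: S) :&: Nb e v = S /\ (J :|: [set v]) :&: Nb e v = set0].
Proof.
move=> [hsym hirr] hJ hS.
have dJ z : z \in J -> ~~ ((z == v) || e v z).
  by move=> zJ; move/subsetP: hJ => /(_ z zJ); rewrite in_setC /Nc /Nb in_setU1 in_set.
have sN z : z \in S -> e v z.
  by move=> /(subsetP hS); rewrite /Uset /Nb !inE => /andP[].
have vJ : v \notin J by apply/negP => /dJ; rewrite eqxx.
have vS : v \notin S by apply/negP => /sN; rewrite (negPf (hirr v)).
have dis : J :&: S = set0.
  apply/setP => z; rewrite !inE; case zJ: (z \in J) => //=.
  by apply/negP => /sN ez; move: (dJ z zJ); rewrite ez orbT.
split.
- by rewrite cardsU dis cards0 subn0.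
- by rewrite setUC cardsU1 vJ.
- by rewrite in_setU negb_or vJ vS.
- by rewrite in_setU set11 orbT.
split; apply/setP => z; rewrite !inE.
  case zS: (z \in S); first by rewrite sN ?orbT.
  rewrite orbF; case zJ: (z \in J) => //=.
  by apply/negP => ez; move: (dJ z zJ); rewrite ez orbT.
case zv: (z == v); first by rewrite (eqP zv) (negPf (hirr v)) andbF.
rewrite orbF; case zJ: (z \in J) => //=.
by apply/negP => ez; move: (dJ z zJ); rewrite ez orbT.
Qed.

Section Local.
Variables (R : realFieldType) (V : finType) (e : rel V) (lam : R).
Hypotheses (hG : simple_graph e) (htf : triangle_free e).

Lemma local1 v : \sum_(I : {set V} | independent e I) lam ^+ #|I| =
  \sum_(J : {set V} | (J \subset ~: Nc e v) && independent e J)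
     lam ^+ #|J| * (lam + (1 + lam) ^+ #|Uset e v J|).
Proof.
rewrite (decomp_sum (R:=R) e v (fun I => lam ^+ #|I|) hG htf).
apply: eq_bigr => J /andP[hJ _].
have [_ h2 _ _ _] := J_facts _ _ _ set0 hG hJ (sub0set _).
rewrite h2 exprS mulrDr mulrC; congr (_ + _).
rewrite -(@sum_subset_pow _ V lam _ (Uset e v J) erefl) mulr_sumr.
apply: eq_bigr => S hS; have [h1 _ _ _ _] := J_facts _ _ _ _ hG hJ hS.
by rewrite h1 exprD.
Qed.

Lemma local2 v : \sum_(I : {set V} | independent e I) (v \in I)%:R * lam ^+ #|I| =
  \sum_(J : {set V} | (J \subset ~: Nc e v) && independent e J) lam ^+ #|J| * lam.
Proof.
rewrite (decomp_sum (R:=R) e v (fun I => (v \in I)%:R * lam ^+ #|I|) hG htf).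
apply: eq_bigr => J /andP[hJ _].
have [_ h2 _ h4 _] := J_facts _ _ _ set0 hG hJ (sub0set _).
rewrite h2 h4 mul1r exprS mulrC big1 ?addr0 //.
move=> S hS; have [_ _ h3 _ _] := J_facts _ _ _ _ hG hJ hS.
by rewrite (negPf h3) mul0r.
Qed.

Lemma local3 v : \sum_(I : {set V} | independent e I) #|I :&: Nb e v|%:R * lam ^+ #|I| =
  \sum_(J : {set V} | (J \subset ~: Nc e v) && independent e J)
     lam ^+ #|J| * (#|Uset e v J|%:R * lam * (1 + lam) ^+ (#|Uset e v J|).-1).
Proof.
rewrite (decomp_sum (R:=R) e v (fun I => #|I :&: Nb e v|%:R * lam ^+ #|I|) hG htf).
apply: eq_bigr => J /andP[hJ _].
have [_ _ _ _ [_ h5]] := J_facts _ _ _ set0 hG hJ (sub0set _).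
rewrite h5 cards0 mul0r add0r.
rewrite -sum_subset_card_pow mulr_sumr.
apply: eq_bigr => S hS; have [h1 _ _ _ [h5' _]] := J_facts _ _ _ _ hG hJ hS.
rewrite h5' h1 exprD; ring.
Qed.
End Local.
Lemma card_as_sum {V : finType} (A : {set V}) : #|A| = (\sum_(u : V) (u \in A))%N.
Proof. by rewrite -sum1_card big_mkcond /=; apply: eq_bigr => u _; case: (u \in A). Qed.

Lemma deg_sum {V : finType} (e : rel V) (d : nat) (I : {set V}) :
  simple_graph e -> regular e d ->
  (\sum_(v : V) #|I :&: Nb e v|)%N = (d * #|I|)%N.
Proof.
move=> [hsym _] hreg.
transitivity (\sum_(v : V) \sum_(u in I) (e v u : nat))%N.
  apply: eq_bigr => v _; rewrite card_as_sum [RHS]big_mkcond /=.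
  by apply: eq_bigr => u _; rewrite /Nb !inE; case: (u \in I).
rewrite exchange_big /= mulnC -sum_nat_const.
apply: eq_bigr => u _; rewrite -(hreg u) card_as_sum.
by apply: eq_bigr => v _; rewrite inE hsym.
Qed.

Section Global.
Variables (R : realFieldType) (V : finType) (e : rel V) (d : nat) (lam : R).
Hypotheses (hG : simple_graph e) (htf : triangle_free e) (hreg : regular e d).

Definition Zs := \sum_(I : {set V} | independent e I) lam ^+ #|I|.
Definition Ts := \sum_(I : {set V} | independent e I) #|I|%:R * lam ^+ #|I|.
Definition DS (f : nat -> R) := \sum_(v : V)
  \sum_(J : {set V} | (J \subset ~: Nc e v) && independent e J) lam ^+ #|J| * f #|Uset e v J|.

Lemma G1 : #|V|%:R * Zs = DS (fun y => lam + (1 + lam) ^+ y).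
Proof.
rewrite /DS; under eq_bigr do rewrite -local1 //.
by rewrite sumr_const mulr_natl.
Qed.

Lemma G2 : Ts = DS (fun _ => lam).
Proof.
rewrite /DS; under eq_bigr do rewrite -local2 //.
rewrite exchange_big /= /Ts; apply: eq_bigr => I _.
rewrite -mulr_suml -natr_sum; congr (_%:R * _).
by rewrite card_as_sum.
Qed.

Lemma G3 : d%:R * Ts = DS (fun y => y%:R * lam * (1 + lam) ^+ y.-1).
Proof.
rewrite /DS; under eq_bigr do rewrite -local3 //.
rewrite exchange_big /= /Ts mulr_sumr; apply: eq_bigr => I _.
by rewrite -mulr_suml -natr_sum (deg_sum _ d) // natrM mulrA.
Qed.
End Global.
Arguments DS {R V}.
Arguments Zs {R V}.
Arguments Ts {R V}.
Section Global2.
Variables (R : realFieldType) (V : finType) (e : rel V) (d : nat) (lam : R).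
Hypotheses (hG : simple_graph e) (htf : triangle_free e) (hreg : regular e d)
  (hd : (1 <= d)%N) (hlam : 0 < lam).

Lemma DS_lin (c1 c2 : R) f g :
  DS e lam (fun y => c1 * f y + c2 * g y) = c1 * DS e lam f + c2 * DS e lam g.
Proof.
rewrite /DS !mulr_sumr -big_split; apply: eq_bigr => v _ /=.
rewrite !mulr_sumr -big_split; apply: eq_bigr => J _ /=; ring.
Qed.

Lemma DS_ext f g : (forall y, f y = g y) -> DS e lam f = DS e lam g.
Proof. move=> h; rewrite /DS; apply: eq_bigr => v _; apply: eq_bigr => J _; by rewrite h. Qed.

Lemma Uset_le v J : (#|Uset e v J| <= d)%N.
Proof.
rewrite -(hreg v); apply: subset_leq_card; apply/subsetP => u.
by rewrite /Uset /Nb !inE => /andP[].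
Qed.

Lemma DS_le f g : (forall y, (y <= d)%N -> f y <= g y) -> DS e lam f <= DS e lam g.
Proof.
move=> h; rewrite /DS; apply: ler_sum => v _; apply: ler_sum => J _.
apply: ler_wpM2l; first by rewrite exprn_ge0 // ltW.
exact/h/Uset_le.
Qed.

Lemma sum_pw : DS e lam (fun y => pwR lam d y - pwL lam d y) =
  d%:R * (lam * (1 + lam) ^+ d.-1 * (#|V|%:R * Zs e lam) - Ts e lam * (2 * (1 + lam) ^+ d - 1)).
Proof.
rewrite (@DS_ext _ (fun y =>
   (d%:R * lam * (1 + lam) ^+ d.-1) * (lam + (1 + lam) ^+ y) +
   (- 1) * ((d%:R * (1 + lam) ^+ d) * lam + ((1 + lam) ^+ d - 1) * (y%:R * lam * (1 + lam) ^+ y.-1))))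
  ; last by move=> y; rewrite /pwR /pwL; ring.
rewrite DS_lin.
rewrite (DS_lin (d%:R * (1 + lam) ^+ d) ((1 + lam) ^+ d - 1) (fun _ => lam)
   (fun y => y%:R * lam * (1 + lam) ^+ y.-1)).
rewrite -G1 // -G2 // -(@G3 _ _ _ d) //; ring.
Qed.

Lemma sum_pw_ge0 : 0 <= DS e lam (fun y => pwR lam d y - pwL lam d y).
Proof.
have -> : 0 = DS e lam (fun _ => 0).
  by rewrite /DS big1 // => v _; rewrite big1 // => J _; rewrite mulr0.
apply: DS_le => y yd; rewrite subr_ge0; exact: pw_le.
Qed.

Lemma main_ineq : Ts e lam * (2 * (1 + lam) ^+ d - 1) <= lam * (1 + lam) ^+ d.-1 * (#|V|%:R * Zs e lam).
Proof.
have := sum_pw_ge0; rewrite sum_pw pmulr_rge0 ?subr_ge0 //.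
by rewrite ltr0n.
Qed.

Lemma eq_case : Ts e lam * (2 * (1 + lam) ^+ d - 1) = lam * (1 + lam) ^+ d.-1 * (#|V|%:R * Zs e lam) ->
  forall v (J : {set V}), J \subset ~: Nc e v -> independent e J ->
  #|Uset e v J| = 0%N \/ #|Uset e v J| = d.
Proof.
move=> heq v J hJ iJ.
have h0 : DS e lam (fun y => pwR lam d y - pwL lam d y) = 0 by rewrite sum_pw heq subrr mulr0.
have nn : forall v', 0 <= \sum_(J : {set V} | (J \subset ~: Nc e v') && independent e J)
     lam ^+ #|J| * (pwR lam d #|Uset e v' J| - pwL lam d #|Uset e v' J|).
  move=> v'; apply: sumr_ge0 => J' _; apply: mulr_ge0; first by rewrite exprn_ge0 // ltW.
  by rewrite subr_ge0; apply: pw_le => //; apply: Uset_le.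
have := @psumr_eq0P _ _ _ _ (fun v' _ => nn v') h0 v isT.
move=> h1.
have nn2 : forall J' : {set V}, (J' \subset ~: Nc e v) && independent e J' ->
   0 <= lam ^+ #|J'| * (pwR lam d #|Uset e v J'| - pwL lam d #|Uset e v J'|).
  move=> J' _; apply: mulr_ge0; first by rewrite exprn_ge0 // ltW.
  by rewrite subr_ge0; apply: pw_le => //; apply: Uset_le.
have PJ : (J \subset ~: Nc e v) && independent e J by rewrite hJ iJ.
have h2 := @psumr_eq0P _ _ _ _ nn2 h1 J PJ.
case/boolP: (0 < #|Uset e v J| < d)%N => [/andP[y0 yd] | hy].
  have := @pw_lt _ lam d _ hlam y0 yd; rewrite -subr_gt0 => hp.
  move: h2 => /eqP; rewrite mulf_eq0 expf_eq0 (gt_eqF hp) (gt_eqF hlam) andbF //.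
have := Uset_le v J; move: hy; case: #|Uset e v J| => [|y]; first by left.
move=> hy hle; right; move: hy; rewrite /=; lia.
Qed.
End Global2.
Lemma key_from_eq {V : finType} (e : rel V) (d : nat) :
  simple_graph e -> triangle_free e -> regular e d ->
  (forall v (J : {set V}), J \subset ~: Nc e v -> independent e J ->
     #|Uset e v J| = 0%N \/ #|Uset e v J| = d) ->
  forall v u x, e v u -> e u x -> Nb e v = Nb e x.
Proof.
move=> [hsym hirr] htf hreg hY v u x evu eux.
case: (eqVneq x v) => [-> // | xv].
have nvx : ~~ e v x by apply: htf evu eux.
have hJ : [set x] \subset ~: Nc e v.
  by rewrite sub1set in_setC /Nc /Nb in_setU1 in_set (negPf xv) (negPf nvx).
have iJ : independent e [set x].
  by apply/indepP => a b; rewrite !inE => /eqP -> /eqP ->; apply: hirr.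
have hU : Uset e v [set x] = [set u' in Nb e v | ~~ e u' x].
  apply/setP => z; rewrite /Uset !inE; congr (_ && _).
  apply/forall_inP/idP => [h | h j]; first by apply: h; rewrite inE.
  by rewrite inE => /eqP ->.
have sub : Uset e v [set x] \proper Nb e v.
  rewrite hU; apply/properP; split.
    by apply/subsetP => z; rewrite !inE => /andP[].
  by exists u; rewrite !inE ?evu // eux.
have hd : #|Nb e v| = d by apply: hreg.
have := proper_card sub; rewrite hd.
case: (hY v _ hJ iJ) => [h0 _ | -> ]; last by rewrite ltnn.
have sN : Nb e v \subset Nb e x.
  apply/subsetP => z zv; apply/negPn/negP => zx.
  have : z \in Uset e v [set x].
    rewrite hU in_set zv /=; by rewrite /Nb inE hsym in zx.
  by move/eqP: h0; rewrite cards_eq0 => /eqP ->; rewrite inE.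
apply/eqP; rewrite eqEcard sN /=.
by rewrite hd (hreg x).
Qed.
Section Struct.
Local Set Implicit Arguments.
Variables (V : finType) (e : rel V) (d : nat).
Hypotheses (hsym : forall x y, e x y = e y x) (hirr : forall x, ~~ e x x)
  (hreg : regular e d) (hd : (1 <= d)%N)
  (hkey : forall v u x, e v u -> e u x -> Nb e v = Nb e x).

Definition side (x : V) : {set V} := [set y | Nb e y == Nb e x].
Definition comp (x : V) : {set V} := side x :|: Nb e x.
Definition rep (x : V) : V := odflt x [pick y in comp x].

Lemma cardNb x : #|Nb e x| = d. Proof. exact: hreg. Qed.

Lemma side_nb x u : e x u -> side x = Nb e u.
Proof.
move=> exu; apply/setP => y; rewrite /side /Nb !inE.
apply/idP/idP => [/eqP h | euy].
  have : u \in [set z | e y z] by rewrite h inE.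
  by rewrite inE hsym.
by apply/eqP/esym; apply: hkey exu euy.
Qed.

Lemma has_nb x : exists u, e x u.
Proof.
have : (0 < #|Nb e x|)%N by rewrite cardNb.
by case/card_gt0P => u; rewrite /Nb inE; exists u.
Qed.

Lemma card_side x : #|side x| = d.
Proof. by have [u exu] := has_nb x; rewrite (side_nb exu) cardNb. Qed.

Lemma side_self x : x \in side x.
Proof. by rewrite /side inE. Qed.

Lemma side_eq x y : y \in side x -> side y = side x.
Proof. by rewrite /side inE => /eqP h; apply/setP => z; rewrite !inE h. Qed.

Lemma side_edge x y : e x y -> side y = Nb e x.
Proof. by move=> exy; apply: side_nb; rewrite hsym. Qed.

Lemma nb_not_side w z : z \in Nb e w -> z \notin side w.
Proof.
rewrite /Nb /side !inE => ewz; apply/negP => /eqP h.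
have : w \in Nb e z by rewrite /Nb inE hsym.
by rewrite h /Nb inE (negPf (hirr w)).
Qed.

Lemma comp_self x : x \in comp x.
Proof. by rewrite /comp in_setU side_self. Qed.

Lemma comp_eq x y : y \in comp x -> comp y = comp x.
Proof.
rewrite /comp in_setU => /orP[ys | yn].
  rewrite (side_eq ys); move: ys; rewrite /side inE => /eqP ->; done.
have exy : e x y by move: yn; rewrite /Nb inE.
by rewrite (side_edge exy) (side_nb exy) setUC.
Qed.

Lemma rep_comp x : rep x \in comp x.
Proof.
rewrite /rep; case: pickP => [z // | h].
by move: (h x); rewrite comp_self.
Qed.

Lemma rep_eq x y : comp y = comp x -> rep y = rep x.
Proof.
move=> h; rewrite /rep h; case: pickP => [z // | h'].
by move: (h' x); rewrite comp_self.
Qed.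

Lemma rep_rep x : rep (rep x) == rep x.
Proof. by apply/eqP/rep_eq/comp_eq/rep_comp. Qed.

Lemma idxP x : (index x (enum (side x)) < d)%N.
Proof. by rewrite -(card_side x) cardE index_mem mem_enum side_self. Qed.

Lemma in_side_or_nb r x : x \in comp r -> (x \in side r) || (x \in Nb e r).
Proof. by rewrite /comp in_setU. Qed.

Lemma side_of_rep x : (if x \in side (rep x) then side (rep x) else Nb e (rep x)) = side x.
Proof.
case: ifP => [xs | xs]; first by rewrite (side_eq xs).
have : x \in comp (rep x) by rewrite (comp_eq (rep_comp x)) comp_self.
move/in_side_or_nb; rewrite xs /= /Nb inE => erx.
by rewrite (side_edge erx).
Qed.

Lemma structure_ok : disjoint_union_Kdd e d.
Proof.
pose I := {x : V | rep x == x}.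
pose f := fun x : V => (exist (fun z => rep z == z) (rep x) (rep_rep x) : I,
   (x \in side (rep x), Ordinal (idxP x))).
pose g := fun p : I * (bool * 'I_d) =>
  nth (val p.1) (enum (if p.2.1 then side (val p.1) else Nb e (val p.1))) p.2.2.
exists I, f; split.
  exists g.
    move=> x; rewrite /g /f /= side_of_rep.
    by rewrite nth_index // mem_enum side_self.
  case=> [[i ri] [b k]]; rewrite /g /=.
  set S := if b then side i else Nb e i.
  have eS : S = if b then side i else Nb e i by [].
  clearbody S.
  have cS : #|S| = d by move: eS; case: b => ->; rewrite ?card_side ?cardNb.
  set y := nth i (enum S) k.
  have yS : y \in S by rewrite -mem_enum /y mem_nth // -cardE cS.
  have yc : y \in comp i by move: eS yS; rewrite /comp in_setU; case: b => -> ->; rewrite ?orbT.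
  have ry : rep y = i by rewrite (rep_eq (comp_eq yc)); apply/eqP.
  have sy : side y = S.
    move: eS yS; case: b => -> ys; first by rewrite (side_eq ys).
    by apply: side_edge; move: ys; rewrite /Nb inE.
  have bs : (y \in side (rep y)) = b.
    rewrite ry; move: eS yS; case: b => -> // yn.
    by apply/negbTE/nb_not_side.
  rewrite /f; congr (_, (_, _)).
  - by apply: val_inj => /=.
  - exact: bs.
  - apply: val_inj => /=; rewrite sy /y index_uniq ?enum_uniq //.
    by rewrite -cardE cS.
move=> x y; rewrite /f /Kdd_rel /= -val_eqE /=.
apply/idP/idP.
  move=> exy.
  have yc : y \in comp x by rewrite /comp in_setU /Nb inE exy orbT.
  rewrite (rep_eq (comp_eq yc)) eqxx /=.
  have xc : x \in comp (rep x) by rewrite (comp_eq (rep_comp x)) comp_self.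
  case/orP: (in_side_or_nb xc) => [xs | xn].
    rewrite xs; case ys: (y \in side (rep x)) => //.
    have : y \in Nb e (rep x).
      by move: xs; rewrite /side inE => /eqP <-; rewrite /Nb inE.
    by move/nb_not_side; rewrite ys.
  rewrite (negPf (nb_not_side xn)).
  suff ys : y \in side (rep x) by rewrite ys.
  rewrite /side inE; apply/eqP; symmetry; apply: (hkey (u:=x)) => //; by move: xn; rewrite /Nb inE.
case/andP => /eqP hr hne.
have xc : x \in comp (rep x) by rewrite (comp_eq (rep_comp x)) comp_self.
have yc : y \in comp (rep x) by rewrite hr (comp_eq (rep_comp y)) comp_self.
rewrite -hr in hne.
case/orP: (in_side_or_nb xc) => [xs | xn].
  rewrite xs in hne.
  case/orP: (in_side_or_nb yc) => [ys | yn]; first by rewrite ys in hne.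
  by move: xs; rewrite /side inE => /eqP h; move: yn; rewrite -h /Nb inE.
have xs : (x \in side (rep x)) = false by apply/negbTE/nb_not_side.
rewrite xs /= in hne.
move: hne; case ys: (y \in side (rep x)) => // _.
by move: ys; rewrite /side inE => /eqP h; move: xn; rewrite -h /Nb inE hsym.
Qed.
End Struct.
Lemma alpha_eq {R : realFieldType} {V : finType} (e : rel V) (lam : R) :
  alpha_bar e lam = Ts e lam / Zs e lam.
Proof.
rewrite /alpha_bar /indep_poly /Ts /Zs.
rewrite horner_sum raddf_sum /= horner_sum mulr_sumr.
congr (_ / _); last by apply: eq_bigr => A _; rewrite hornerXn.
apply: eq_bigr => A _; rewrite derivXn hornerMn hornerXn.
case: #|A| => [|k]; first by rewrite !mulr0n mul0r mulr0.
by rewrite /= exprS mulrnAr mulr_natl.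
Qed.

Lemma Zs_gt0 {R : realFieldType} {V : finType} (e : rel V) (lam : R) : 0 < lam -> 0 < Zs e lam.
Proof.
move=> hl; rewrite /Zs (bigD1 set0) /=; last by apply/indepP => x y; rewrite inE.
rewrite cards0 expr0 ltr_wpDr // sumr_ge0 // => A _; exact/exprn_ge0/ltW.
Qed.

Section Kdd.
Variables (R : realFieldType) (d : nat) (lam : R).
Let L : {set bool * 'I_d} := [set u | u.1].
Let Rr : {set bool * 'I_d} := [set u | ~~ u.1].

Lemma cardL : #|L| = d.
Proof.
have -> : L = setX [set true] setT by apply/setP => -[b i]; rewrite !inE andbT.
by rewrite cardsX cards1 cardsT card_ord mul1n.
Qed.
Lemma cardRr : #|Rr| = d.
Proof.
have -> : Rr = setX [set false] setT by apply/setP => -[[] i]; rewrite !inE.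
by rewrite cardsX cards1 cardsT card_ord mul1n.
Qed.

Lemma indepK (A : {set bool * 'I_d}) : independent (@Kdd_rel d) A = (A \subset L) || (A \subset Rr).
Proof.
apply/indepP/idP => [h | h x y xA yA].
  case: (boolP (A \subset L)) => //= /subsetPn [a aA aL].
  apply/subsetP => b bA; move: (h a b aA bA) aL; rewrite /Kdd_rel !inE negbK => /eqP <-.
  by case: (a.1).
rewrite /Kdd_rel negbK; case/orP: h => /subsetP s.
  by move: (s x xA) (s y yA); rewrite !inE => -> ->.
by move: (s x xA) (s y yA); rewrite !inE => /negPf -> /negPf ->.
Qed.

Lemma sumK (F : {set bool * 'I_d} -> R) :
  \sum_(A : {set bool * 'I_d} | independent (@Kdd_rel d) A) F A =
  \sum_(A : {set bool * 'I_d} | A \subset L) F A + \sum_(A : {set bool * 'I_d} | A \subset Rr) F A - F set0.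
Proof.
rewrite (eq_bigl _ _ indepK) (bigID (fun A : {set bool * 'I_d} => A \subset L)) /=.
rewrite [X in _ = _ + X - _](bigID (fun A : {set bool * 'I_d} => A \subset L)) /=.
rewrite (big_pred1 set0 (P := fun A : {set bool * 'I_d} => (A \subset Rr) && (A \subset L))); last first.
  move=> A /=; apply/idP/idP => [/andP[/subsetP s1 /subsetP s2] | /eqP ->]; last by rewrite !sub0set.
  apply/eqP/setP => u; rewrite inE; apply/negP => uA.
  by move: (s1 u uA) (s2 u uA); rewrite !inE => /negPf ->.
have -> : \sum_(i : {set bool * 'I_d} | ((i \subset L) || (i \subset Rr)) && (i \subset L)) F i = \sum_(A : {set bool * 'I_d} | A \subset L) F A.
  by apply: eq_bigl => A; case: (A \subset L); rewrite ?andbF.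
have -> : \sum_(i : {set bool * 'I_d} | ((i \subset L) || (i \subset Rr)) && ~~ (i \subset L)) F i =
   \sum_(i : {set bool * 'I_d} | (i \subset Rr) && ~~ (i \subset L)) F i.
  by apply: eq_bigl => A; case: (A \subset L); rewrite ?andbF ?andbT.
rewrite -addrA; congr (_ + _); by rewrite addrAC subrr add0r.
Qed.

Lemma alphaK : (0 < d)%N -> 0 < lam ->
  ((2 * d)%:R)^-1 * alpha_bar (@Kdd_rel d) lam
  = lam * (1 + lam) ^+ d.-1 / (2 * (1 + lam) ^+ d - 1).
Proof.
move=> d0 hl; rewrite alpha_eq /Ts /Zs !sumK.
rewrite !sum_subset_card_pow cardL cardRr.
rewrite (@sum_subset_pow _ _ lam d L cardL) (@sum_subset_pow _ _ lam d Rr cardRr).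
rewrite cards0 expr0 mul0r subr0.
have hd : (d%:R : R) != 0 by rewrite pnatr_eq0 -lt0n.
have hK : 2 * (1 + lam) ^+ d - 1 != 0.
  rewrite gt_eqF // subr_gt0 (lt_le_trans (y := 2)) ?ltr1n //.
  by rewrite ler_peMr // exprn_ege1 // lerDl ltW.
have eK : (1 + lam) ^+ d + (1 + lam) ^+ d - 1 = 2 * (1 + lam) ^+ d - 1 by ring.
rewrite eK natrM; field.
by rewrite hK hd.
Qed.
End Kdd.
Theorem theorem2p2 (R : realFieldType) (V : finType) (e : rel V) (d : nat)
  (hd : (1 <= d)%N) (hG : simple_graph e) (hreg : regular e d)
  (htf : triangle_free e) (lam : R) (hlam : 0 < lam) :
  [/\ (#|V|%:R)^-1 * alpha_bar e lam <= ((2 * d)%:R)^-1 * alpha_bar (@Kdd_rel d) lam,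
      ((2 * d)%:R)^-1 * alpha_bar (@Kdd_rel d) lam
        = lam * (1 + lam) ^+ d.-1 / (2 * (1 + lam) ^+ d - 1)
    & (#|V|%:R)^-1 * alpha_bar e lam = ((2 * d)%:R)^-1 * alpha_bar (@Kdd_rel d) lam ->
      disjoint_union_Kdd e d].
Proof.
have [hsym hirr] := hG.
have Z0 := Zs_gt0 e lam hlam.
have hK := @alphaK R d lam hd hlam.
have main := @main_ineq R V e d lam hG htf hreg hd hlam.
have K0 : 0 < 2 * (1 + lam) ^+ d - 1.
  rewrite subr_gt0 (lt_le_trans (y := 2)) ?ltr1n //.
  by rewrite ler_peMr // exprn_ege1 // lerDl ltW.
have c0 : 0 < lam * (1 + lam) ^+ d.-1 / (2 * (1 + lam) ^+ d - 1).
  by rewrite divr_gt0 // mulr_gt0 // exprn_gt0 // addr_gt0.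
rewrite hK alpha_eq.
case: (posnP #|V|) => [n0 | npos].
  rewrite n0 invr0 mul0r; split; [exact: ltW | by [] | idtac].
  by move=> h; rewrite -h ltxx in c0.
have n0 : (#|V|%:R : R) != 0 by rewrite pnatr_eq0 -lt0n.
have E : lam * (1 + lam) ^+ d.-1 / (2 * (1 + lam) ^+ d - 1) - (#|V|%:R)^-1 * (Ts e lam / Zs e lam)
   = (lam * (1 + lam) ^+ d.-1 * (#|V|%:R * Zs e lam) - Ts e lam * (2 * (1 + lam) ^+ d - 1))
     / (#|V|%:R * Zs e lam * (2 * (1 + lam) ^+ d - 1)).
  by field; rewrite n0 (gt_eqF Z0) (gt_eqF K0).
have den0 : 0 < #|V|%:R * Zs e lam * (2 * (1 + lam) ^+ d - 1).
  by rewrite !mulr_gt0 // ltr0n.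
split => //.
  by rewrite -subr_ge0 E divr_ge0 ?subr_ge0 // ltW.
move=> heq.
have heq' : Ts e lam * (2 * (1 + lam) ^+ d - 1) = lam * (1 + lam) ^+ d.-1 * (#|V|%:R * Zs e lam).
  move: E; rewrite heq subrr => /esym /eqP; rewrite mulf_eq0 invr_eq0 (gt_eqF den0) orbF.
  by rewrite subr_eq0 => /eqP ->.
have hY := @eq_case R V e d lam hG htf hreg hd hlam heq'.
apply: structure_ok => //.
exact: (key_from_eq e d hG htf hreg hY).
Qed.
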